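(* Let $\emptyset \neq \mathcal O \subseteq \{\cup,\cap,\overline{\phantom{c}},+,/\}$ and let $C$ be an $\mathcal O$-circuit. Then for every natural number $z \ge 2^{|C|}+1$ we have $z\in I(C)$ if and only if $2^{|C|}+1 \in I(C)$.
   Context: Natural numbers include $0$. For $A,B\subseteq\mathbb N$: $A\cup B$, $A\cap B$ are the usual operations, $\overline{A}=\mathbb N\setminus A$, $A+B=\{a+b: a\in A, b\in B\}$, $A\times B=\{a\cdot b: a\in A, b\in B\}$, and $A/B=\{c\in\mathbb N:\exists a\in A\ \exists b\in B\setminus\{0\}: a=c\cdot b\}$ (exact integer division without remainder or rounding). For $\emptyset\ne\mathcal O\subseteq\{\cup,\cap,\overline{\phantom{c}},+,\times,/\}$, an $\mathcal O$-circuit $C=(V,E,g_C,\alpha)$ is a finite acyclic directed multigraph with gate set $V\subseteq\mathbb N$, every gate having indegree $0$, $1$ or $2$, a designated output gate $g_C\in V$, and a labeling $\alpha$: gates of indegree $0$ (input gates) are labeled by natural numbers, gates of indegree $1$ are labeled $\overline{\phantom{c}}$ (allowed only if $\overline{\phantom{c}}\in\mathcal O$), and gates of indegree $2$ are labeled by an operation in $\mathcal O\setminus\{\overline{\phantom{c}}\}$. The result set $I(g)\subseteq\mathbb N$ is defined inductively: $I(g)=\{\alpha(g)\}$ for an input gate; $I(g)=\mathbb N\setminus I(p)$ for a complement gate with predecessor $p$; $I(g)=I(g_1)\,\sigma\,I(g_2)$ for a gate labeled $\sigma$ with predecessors $g_1\le g_2$ (a double edge from one gate gives $g_1=g_2$).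 $I(C)=I(g_C)$. A circuit is encoded as a bit string listing its gates in reverse topological order, each gate as the triple (gate name, label, list of predecessors), with all numbers (including input labels) in binary; $|C|$ denotes the length of this encoding. *)

(* Defs.v *)
From mathcomp Require Import all_boot.
Set Implicit Arguments. Unset Strict Implicit. Unset Printing Implicit Defensive.

Inductive op := Cup | Cap | Compl | Plus | Times | Div.

Definition op_code (o : op) : nat :=
  match o with Cup => 0 | Cap => 1 | Compl => 2 | Plus => 3 | Times => 4 | Div => 5 end.

Definition nset := nat -> Prop.

Definition bin_sem (o : op) (A B : nset) : nset :=
  match o with
  | Cup => fun c => A c \/ B c
  | Cap => fun c => A c /\ B c
  | Compl => fun _ => False (* never used: complement is unary *)
  | Plus => fun c => exists a b, A a /\ B b /\ c = a + b
  | Times => fun c => exists a b, A a /\ B b /\ c = a * b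
  | Div => fun c => exists a b, A a /\ B b /\ b <> 0 /\ a = c * b
  end.

Inductive label := Input of nat | Gate of op.

Record gate := mkGate { gname : nat; glabel : label; gpreds : seq nat }.

(** A circuit is given by its list of gates in reverse topological order
    (every predecessor of a gate occurs later in the list) and its output gate. *)
Record circuit := mkCircuit { cgates : seq gate; cout : nat }.

Fixpoint topo_ok (gs : seq gate) : bool :=
  match gs with
  | [::] => true
  | g :: rest => all (fun p => p \in map gname rest) (gpreds g) && topo_ok rest
  end.

Definition gate_ok (O : pred op) (g : gate) : bool :=
  match glabel g with
  | Input _ => gpreds g == [::]
  | Gate Compl => O Compl && (size (gpreds g) == 1)
  | Gate o => O o && (size (gpreds g) == 2)
  end.

Definition is_circuit (O : pred op) (C : circuit) : bool :=
  [&& uniq (map gname (cgates C)), cout C \in map gname (cgates C),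
      topo_ok (cgates C) & all (gate_ok O) (cgates C)].

Definition gate_sem (lab : label) (ps : seq nat) (v : nat -> nset) : nset :=
  match lab with
  | Input n => fun c => c = n
  | Gate Compl => fun c => ~ v (nth 0 ps 0) c
  | Gate o => let a := nth 0 ps 0 in let b := nth 0 ps 1 in
              bin_sem o (v (minn a b)) (v (maxn a b))
  end.

Fixpoint val (gs : seq gate) : nat -> nset :=
  match gs with
  | [::] => fun _ _ => False
  | g :: rest => fun x =>
      if x == gname g then gate_sem (glabel g) (gpreds g) (val rest) else val rest x
  end.

Definition I (C : circuit) : nset := val (cgates C) (cout C).

Inductive sym := B0 | B1 | Sep.

Fixpoint bin_aux (fuel n : nat) : seq sym :=
  match fuel with
  | 0 => [::]
  | f.+1 => if n < 2 then [:: if n == 0 then B0 else B1]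
            else rcons (bin_aux f n./2) (if odd n then B1 else B0)
  end.

(** binary representation of n (most significant bit first; 0 is "0") *)
Definition bin (n : nat) : seq sym := bin_aux n.+1 n.

Definition enc_label (l : label) : seq sym :=
  match l with
  | Input n => B0 :: bin n
  | Gate o => B1 :: bin (op_code o)
  end.

Definition enc_gate (g : gate) : seq sym :=
  bin (gname g) ++ Sep :: enc_label (glabel g) ++ Sep ::
  flatten [seq bin p ++ [:: Sep] | p <- gpreds g] ++ [:: Sep].

Definition encode (C : circuit) : seq sym :=
  bin (cout C) ++ Sep :: flatten (map enc_gate (cgates C)).

Definition csize (C : circuit) : nat := size (encode C).

(* Main.v *)
Require Import Defs.
From mathcomp Require Import all_boot.
From mathcomp Require Import zify.

Definition cf (M : nat) (A : nset) := forall z, M <= z -> (A z <-> A M).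

Lemma cf_mono M M' A : cf M A -> M <= M' -> cf M' A.
Proof. move=> H le z hz; rewrite (H z); last lia. rewrite (H M'); last lia. tauto. Qed.

Lemma cf_of_move M A : (forall z w, M <= z -> M <= w -> A z -> A w) -> cf M A.
Proof. move=> H z hz; split; apply: H => //. Qed.

Lemma full_of M A y : cf M A -> M <= y -> A y -> forall w, M <= w -> A w.
Proof. move=> H hy Ay w hw; apply/(H w hw); apply/(H y hy); exact Ay. Qed.

Lemma cf_plus M A B : cf M A -> cf M B -> cf (M + M) (bin_sem Plus A B).
Proof.
move=> HA HB; apply: cf_of_move => z w hz hw /= [a [b [Aa [Bb Hz]]]]; subst z.
have [ha|ha] := leqP M a.
- have FA := @full_of M A _ HA ha Aa.
  have [hb|hb] := leqP b (w - M).
  + exists (w - b), b; split; [apply: FA; lia| split => //; lia].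
  + have FB := @full_of M B _ HB (_ : M <= b) Bb.
    exists M, (w - M); split; [apply: FA; lia| split; [apply: FB; lia | lia]].
- have hb : M <= b by lia.
  have FB := @full_of M B _ HB hb Bb.
  exists a, (w - a); split => //; split; [apply: FB; lia| lia].
Qed.

Lemma cf_div M A B : cf M A -> cf M B -> cf M (bin_sem Div A B).
Proof.
move=> HA HB; apply: cf_of_move => z w hz hw /= [a [b [Aa [Bb [b0 Ha]]]]]; subst a.
have hzb : M <= z * b by rewrite -[M]muln1; apply: leq_mul => //; lia.
have FA := @full_of M A _ HA hzb Aa.
exists (w * b), b; split; [apply: FA; rewrite -[M]muln1; apply: leq_mul => //; lia|].
by split.
Qed.

Fixpoint bnd (gs : seq gate) : nat :=
  match gs with
  | [::] => 0
  | g :: rest => match glabel g with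
                 | Input n => maxn n.+1 (bnd rest)
                 | Gate Plus => bnd rest + bnd rest
                 | _ => bnd rest end
  end.

Lemma main O gs : ~~ O Times -> all (gate_ok O) gs -> forall x, cf (bnd gs) (Defs.val gs x).
Proof.
move=> nT; elim: gs => [|g rest IH] /=.
  by move=> _ x z _; split.
move=> /andP [gok aok] x.
have IHr := IH aok.
have lift : forall M, bnd rest <= M -> cf M (Defs.val rest x).
  by move=> M h; apply: cf_mono (IHr x) h.
case: (x == gname g).
2: { case: (glabel g) => [n|[]]; apply: lift => //; lia. }
move: gok; rewrite /gate_ok /gate_sem.
case: (glabel g) => [n|[]] gok.
- apply: (@cf_mono n.+1); last lia.
  move=> z hz /=; split => h; lia.
- move=> z hz /=; rewrite (IHr _ z hz) (IHr _ z hz); tauto.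
- move=> z hz /=; rewrite (IHr _ z hz) (IHr _ z hz); tauto.
- move=> z hz /=; rewrite (IHr _ z hz); tauto.
- exact: cf_plus.
- by move: gok; rewrite (negbTE nT).
- exact: cf_div.
Qed.

Lemma bin_aux_bound f n : n < f -> n.+1 <= 2 ^ size (bin_aux f n).
Proof.
elim: f n => [|f IH] n hn //=.
case: ifP => h2; first by rewrite /=; lia.
rewrite size_rcons expnS.
have := IH n./2 (ltac:(move: (leq_half_double n); lia)).
have := odd_double_half n. case: (odd n) => /= ? ?; lia.
Qed.

Lemma bin_bound n : n.+1 <= 2 ^ size (bin n).
Proof. exact: bin_aux_bound. Qed.

Lemma enc_label_lt g : size (enc_label (glabel g)) < size (enc_gate g).
Proof. rewrite /enc_gate size_cat /= size_cat; lia. Qed.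

Lemma bnd_bound gs : bnd gs <= 2 ^ size (flatten (map enc_gate gs)).
Proof.
elim: gs => [|g rest IH] //=.
rewrite size_cat expnD.
have hl := enc_label_lt g.
have p1 : 0 < 2 ^ size (flatten [seq enc_gate i | i <- rest]) by rewrite expn_gt0.
have p2 : 2 <= 2 ^ size (enc_gate g).
  by rewrite -{1}(expn1 2); apply: leq_pexp2l => //; lia.
move: hl p1 p2 IH.
case: (glabel g) => [n|[]] /= hl p1 p2 IH; try nia.
have hb := bin_bound n.
have : 2 ^ size (bin n) <= 2 ^ size (enc_gate g) by apply: leq_pexp2l => //; lia.
move=> h; rewrite geq_max; apply/andP; split; nia.
Qed.

Theorem corollary1 (O : pred op) (C : circuit) :
  (exists o, O o) -> (forall o, O o -> o <> Times) -> is_circuit O C ->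
  forall z : nat, 2 ^ csize C + 1 <= z -> (I C z <-> I C (2 ^ csize C + 1)).
Proof.
move=> _ hT /and4P [_ _ _ aok] z hz.
have nT : ~~ O Times by apply/negP => /hT.
have H := @main O (cgates C) nT aok (cout C).
have hb := bnd_bound (cgates C).
have : 2 ^ size (flatten (map enc_gate (cgates C))) <= 2 ^ csize C.
  apply: leq_pexp2l => //; rewrite /csize /encode size_cat /=; lia.
move=> h.
have H2 := @cf_mono _ (2 ^ csize C + 1) _ H ltac:(lia). exact: (H2 z hz).
Qed.
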